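(* Let $\mathcal X=\mathbb C^n$ and let $\lambda:\mathrm{Dens}(\mathcal X)\to\mathbb R^n$ map a density matrix to its vector of eigenvalues in decreasing order, regarded as a quantum property. Then $\mathrm{elic}_Q(\lambda)=n^2-1$.
   Context: $\mathrm{Herm}(\mathcal X)$ Hermitian matrices with $\langle X,Y\rangle=\mathrm{Tr}(X^*Y)$; $\mathrm{Dens}(\mathcal X)$ density matrices. A quantum property is a map $\Gamma:\mathrm{Dens}(\mathcal X)\to\mathcal R$. It is elicitable if there is a quantum score $S=(s,\mu)$, $s:\mathcal R\times\mathbb N\to\mathbb R$, $\mu(r)$ a measurement (finite family of positive semidefinite operators summing to $I$), with $\{\Gamma(\rho)\}=\arg\max_{r\in\mathcal R}\sum_y\langle\mu(r)_y,\rho\rangle s(r,y)$ for all $\rho$. $\hat\Gamma:\mathrm{Dens}(\mathcal X)\to\mathbb R^k$ is identifiable if for each $r$ in its range there is $V(r)\in\mathrm{Herm}(\mathcal X)^k$ with $\hat\Gamma(\rho)=r\iff\langle V(r)_i,\rho\rangle=0$ for all $i$. $\Gamma$ is $k$-elicitable if $\Gamma=\psi\circ\hat\Gamma$ for some elicitable and identifiable $\hat\Gamma:\mathrm{Dens}(\mathcal X)\to\mathbb R^k$ and some $\psi:\mathbb R^k\to\mathcal R$; $\mathrm{elic}_Q(\Gamma)$ is the least such $k$. *)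

(* Defs.v *)
(* C^n is modelled with complex numbers R[i] over an
   arbitrary realType R (any realType is isomorphic to the reals). *)
From HB Require Import structures.
From mathcomp Require Import all_boot all_order all_algebra.
From mathcomp Require Import complex.
From mathcomp Require Import boolp classical_sets reals.
Set Implicit Arguments. Unset Strict Implicit. Unset Printing Implicit Defensive.
Import Order.TTheory GRing.Theory Num.Theory.
Local Open Scope ring_scope.

Section Quantum.
Variables (R : realType) (n : nat).
Local Notation C := (R[i]).
Local Notation Mat := ('M[C]_n).

Definition adjmx (m p : nat) (X : 'M[C]_(m, p)) : 'M[C]_(p, m) :=
  map_mx Num.conj X^T.

Definition hermitian (A : Mat) : Prop := adjmx A = A.

(* <X,Y> = Tr(X^* Y); real-valued on Herm(X) (we take the real part). *)
Definition inner (X Y : Mat) : R := complex.Re (\tr (adjmx X *m Y)).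

Definition psd (A : Mat) : Prop :=
  hermitian A /\ forall v : 'cV[C]_n, 0 <= (adjmx v *m A *m v) 0 0.

Definition density (A : Mat) : Prop := psd A /\ \tr A = 1.

(* a measurement: a finite family (mu_0, ..., mu_{m-1}) of PSD operators
   summing to the identity; outcome y is the index in the list *)
Definition measurement (mu : seq Mat) : Prop :=
  (forall y, (y < size mu)%N -> psd (nth 0 mu y)) /\ \sum_(M <- mu) M = 1%:M.

Definition exp_score (T : Type) (s : T -> nat -> R) (mu : T -> seq Mat)
  (r : T) (rho : Mat) : R :=
  \sum_(y < size (mu r)) inner (nth 0 (mu r) y) rho * s r y.

Definition elicitable (T : Type) (G : Mat -> T) : Prop :=
  exists (s : T -> nat -> R) (mu : T -> seq Mat),
    (forall r, measurement (mu r)) /\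
    forall rho, density rho ->
      forall r, r <> G rho -> exp_score s mu r rho < exp_score s mu (G rho) rho.

Definition identifiable (k : nat) (G : Mat -> 'rV[R]_k) : Prop :=
  forall r, (exists rho0, density rho0 /\ G rho0 = r) ->
    exists V : 'I_k -> Mat, (forall i, hermitian (V i)) /\
      forall rho, density rho -> (G rho = r <-> forall i, inner (V i) rho = 0).

Definition k_elicitable (T : Type) (G : Mat -> T) (k : nat) : Prop :=
  exists (Gh : Mat -> 'rV[R]_k) (psi : 'rV[R]_k -> T),
    elicitable Gh /\ identifiable Gh /\
    forall rho, density rho -> G rho = psi (Gh rho).

Definition elicQ_eq (T : Type) (G : Mat -> T) (k : nat) : Prop :=
  k_elicitable G k /\ forall k', k_elicitable G k' -> (k <= k')%N.

(* the vector of eigenvalues (with algebraic multiplicity) in decreasing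
   order: the (unique, for Hermitian A) real row vector v, decreasing, with
   char_poly A = prod_i (X - v_i). *)
Definition eigvals_decr (A : Mat) : 'rV[R]_n :=
  xget 0 [set v : 'rV[R]_n |
    (forall i j : 'I_n, (i <= j)%N -> v 0 j <= v 0 i) /\
    char_poly A = \prod_(i < n) ('X - ((v 0 i)%:C%C)%:P)].

End Quantum.

(* Main.v *)
From Pilot Require Import Defs.
From mathcomp Require Import all_boot all_order all_algebra.
From mathcomp Require Import complex.
From mathcomp Require Import boolp classical_sets reals.
Set Implicit Arguments. Unset Strict Implicit. Unset Printing Implicit Defensive.
From mathcomp Require Import ring lra zify.
Import Order.TTheory GRing.Theory Num.Theory.

Section Basic.
Local Open Scope ring_scope.
Variable R : realType.
Local Notation C := (R[i]).

Lemma adjmxE m p (X : 'M[C]_(m,p)) i j : adjmx X i j = (X j i)^*.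
Proof. by rewrite /adjmx !mxE. Qed.

Lemma adjmxD m p (X Y : 'M[C]_(m,p)) : adjmx (X + Y) = adjmx X + adjmx Y.
Proof. by apply/matrixP=> i j; rewrite !(mxE, adjmxE) rmorphD. Qed.

Lemma adjmxN m p (X : 'M[C]_(m,p)) : adjmx (- X) = - adjmx X.
Proof. by apply/matrixP=> i j; rewrite !(mxE, adjmxE) rmorphN. Qed.

Lemma adjmxB m p (X Y : 'M[C]_(m,p)) : adjmx (X - Y) = adjmx X - adjmx Y.
Proof. by rewrite adjmxD adjmxN. Qed.

Lemma adjmxZ m p (c : C) (X : 'M[C]_(m,p)) : adjmx (c *: X) = c^* *: adjmx X.
Proof. by apply/matrixP=> i j; rewrite !(mxE, adjmxE) rmorphM. Qed.

Lemma adjmxK m p (X : 'M[C]_(m,p)) : adjmx (adjmx X) = X.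
Proof. by apply/matrixP=> i j; rewrite !adjmxE conjCK. Qed.

Lemma adjmx_mul m p q (X : 'M[C]_(m,p)) (Y : 'M[C]_(p,q)) :
  adjmx (X *m Y) = adjmx Y *m adjmx X.
Proof.
apply/matrixP=> i j; rewrite adjmxE !mxE rmorph_sum; apply: eq_bigr => k _.
by rewrite rmorphM !adjmxE mulrC.
Qed.

Lemma adjmx_scalar k (c : C) : adjmx (c%:M : 'M[C]_k) = c^*%:M.
Proof.
apply/matrixP=> i j; rewrite adjmxE !mxE eq_sym.
by case: (i == j); rewrite ?mulr1n ?mulr0n ?rmorph0.
Qed.

Lemma adjmx_delta m p (a : 'I_m) (b : 'I_p) :
  adjmx (delta_mx a b : 'M[C]_(m,p)) = delta_mx b a.
Proof.
apply/matrixP=> i j; rewrite adjmxE !mxE.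
by case: (j == a); case: (i == b); rewrite /= ?rmorph0 ?rmorph1.
Qed.

Lemma adjmx0 m p : adjmx (0 : 'M[C]_(m,p)) = 0.
Proof. by apply/matrixP=> i j; rewrite adjmxE !mxE rmorph0. Qed.

Lemma Re_add (x y : C) : complex.Re (x + y) = complex.Re x + complex.Re y.
Proof. by case: x; case: y. Qed.
Lemma Re_opp (x : C) : complex.Re (- x) = - complex.Re x.
Proof. by case: x. Qed.
Lemma Re_realM (t : R) (x : C) : complex.Re (t%:C%C * x) = t * complex.Re x.
Proof. by case: x => a b /=; rewrite mul0r subr0. Qed.
Lemma Re_sum I (r : seq I) (P : pred I) (F : I -> C) :
  complex.Re (\sum_(i <- r | P i) F i) = \sum_(i <- r | P i) complex.Re (F i).
Proof. by elim/big_rec2: _ => // i x y _ <-; rewrite Re_add. Qed.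
Lemma conj_realC (t : R) : (t%:C%C)^* = t%:C%C :> C.
Proof. by rewrite conj_Creal // complex_real. Qed.

Variable n : nat.
Local Notation Mat := ('M[C]_n).

Lemma innerDl (X Y Z : Mat) : inner (X + Y) Z = inner X Z + inner Y Z.
Proof. by rewrite /inner adjmxD mulmxDl mxtraceD Re_add. Qed.
Lemma innerDr (X Y Z : Mat) : inner X (Y + Z) = inner X Y + inner X Z.
Proof. by rewrite /inner mulmxDr mxtraceD Re_add. Qed.
Lemma innerNl (X Z : Mat) : inner (- X) Z = - inner X Z.
Proof. by rewrite /inner adjmxN mulNmx raddfN Re_opp. Qed.
Lemma innerNr (X Z : Mat) : inner X (- Z) = - inner X Z.
Proof. by rewrite /inner mulmxN raddfN Re_opp. Qed.
Lemma innerBl (X Y Z : Mat) : inner (X - Y) Z = inner X Z - inner Y Z.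
Proof. by rewrite innerDl innerNl. Qed.
Lemma innerBr (X Y Z : Mat) : inner X (Y - Z) = inner X Y - inner X Z.
Proof. by rewrite innerDr innerNr. Qed.
Lemma innerZl (t : R) (X Z : Mat) : inner (t%:C%C *: X) Z = t * inner X Z.
Proof. by rewrite /inner adjmxZ conj_realC -scalemxAl mxtraceZ Re_realM. Qed.
Lemma innerZr (t : R) (X Z : Mat) : inner X (t%:C%C *: Z) = t * inner X Z.
Proof. by rewrite /inner -scalemxAr mxtraceZ Re_realM. Qed.
Lemma inner_suml I (r : seq I) (P : pred I) (F : I -> Mat) Z :
  inner (\sum_(i <- r | P i) F i) Z = \sum_(i <- r | P i) inner (F i) Z.
Proof.
elim/big_rec2: _ => [|i x y _ <-]; last by rewrite innerDl.
by rewrite /inner adjmx0 mul0mx mxtrace0.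
Qed.
Lemma inner1 (Z : Mat) : inner 1%:M Z = complex.Re (\tr Z).
Proof. by rewrite /inner adjmx_scalar rmorph1 mul1mx. Qed.
Lemma inner_density (Z : Mat) : density Z -> inner 1%:M Z = 1.
Proof. by case=> _ trZ; rewrite inner1 trZ. Qed.

Lemma tr_delta_mul (a b : 'I_n) (Z : Mat) : \tr (delta_mx a b *m Z) = Z b a.
Proof.
rewrite /mxtrace (bigD1 a) //= big1 ?addr0.
  rewrite mxE (bigD1 b) //= big1 ?addr0; first by rewrite !mxE !eqxx mul1r.
  by move=> k /negbTE kb; rewrite !mxE kb andbF mul0r.
move=> i /negbTE ia; rewrite mxE big1 // => k _; by rewrite !mxE ia mul0r.
Qed.

Lemma inner_delta (a b : 'I_n) (Z : Mat) : inner (delta_mx a b) Z = complex.Re (Z a b).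
Proof. by rewrite /inner adjmx_delta tr_delta_mul. Qed.

Lemma innerZlC (c : C) (X Z : Mat) : inner (c *: X) Z = complex.Re (c^* * \tr (adjmx X *m Z)).
Proof. by rewrite /inner adjmxZ -scalemxAl mxtraceZ. Qed.


Lemma norm_realC (t : R) : `|t%:C%C| = (`|t|)%:C%C :> C.
Proof. by rewrite normc_def /= expr0n /= addr0 sqrtr_sqr. Qed.
Lemma normC_Re (z : C) : `|z| = (complex.Re `|z|)%:C%C.
Proof. by rewrite RRe_real // normr_real. Qed.

Lemma qformE (v : 'cV[C]_n) (B : Mat) :
  (adjmx v *m B *m v) 0 0 = \sum_x \sum_y Num.conj (v x 0) * B x y * v y 0.
Proof.
rewrite mxE exchange_big /=; apply: eq_bigr => y _.
rewrite mxE mulr_suml; apply: eq_bigr => x _; by rewrite adjmxE.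
Qed.

Lemma qform_real (v : 'cV[C]_n) (B : Mat) : Pilot.Defs.hermitian B ->
  (adjmx v *m B *m v) 0 0 = (complex.Re ((adjmx v *m B *m v) 0 0))%:C%C.
Proof.
move=> hB; rewrite RRe_real // CrealE; apply/eqP.
by rewrite -adjmxE !adjmx_mul adjmxK hB mulmxA.
Qed.

Lemma sq_le (v : 'cV[C]_n) x :
  complex.Re `|v x 0| ^+ 2 <= \sum_z complex.Re `|v z 0| ^+ 2.
Proof.
by rewrite (bigD1 x) //= lerDl sumr_ge0 // => i _; rewrite sqr_ge0.
Qed.

Lemma psd_shift1 (B : Mat) (c : R) : Pilot.Defs.hermitian B ->
  \sum_x \sum_y complex.Re `|B x y| <= c -> psd (c%:C%C%:M + B).
Proof.
move=> hB hc; split.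
  by rewrite /Pilot.Defs.hermitian adjmxD adjmx_scalar conj_realC hB.
move=> v.
pose a z := complex.Re `|v z 0|.
pose S := \sum_z a z ^+ 2.
pose s := \sum_x \sum_y complex.Re `|B x y|.
have ha z : `|v z 0| = (a z)%:C%C by rewrite normC_Re.
have a0 z : 0 <= a z by rewrite /a -lecR -ha /= normr_ge0.
have b0 x y : 0 <= complex.Re `|B x y| by rewrite -lecR -normC_Re normr_ge0.
have -> : adjmx v *m (c%:C%C%:M + B) *m v
    = c%:C%C *: (adjmx v *m v) + adjmx v *m B *m v.
  by rewrite mulmxDr mulmxDl mul_mx_scalar -scalemxAl.
have hS : (adjmx v *m v) 0 0 = S%:C%C.
  rewrite mxE rmorph_sum; apply: eq_bigr => x _.
  by rewrite adjmxE -normCKC ha rmorphXn.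
rewrite [X in 0 <= X]mxE [X in 0 <= X + _]mxE hS qform_real //.
set q := complex.Re _.
have hq : `|q| <= s * S.
  have : `|q%:C%C| <= (\sum_x \sum_y a x * complex.Re `|B x y| * a y)%:C%C.
    rewrite -qform_real // qformE.
    apply: le_trans (ler_norm_sum _ _ _) _.
    rewrite rmorph_sum; apply: ler_sum => x _.
    apply: le_trans (ler_norm_sum _ _ _) _.
    rewrite rmorph_sum; apply: ler_sum => y _.
    by rewrite !normrM norm_conjC !ha -normC_Re !rmorphM.
  rewrite norm_realC lecR => /le_trans; apply.
  rewrite /s mulr_suml; apply: ler_sum => x _.
  rewrite mulr_suml; apply: ler_sum => y _.
  have h1 := sq_le v x; have h2 := sq_le v y.
  rewrite -/(a x) -/(a y) -/S in h1 h2.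
  have hxy : a x * a y <= S by have := a0 x; have := a0 y; nra.
  have := b0 x y; nra.
rewrite -rmorphM -rmorphD ler0c.
have : s <= c by [].
have : 0 <= S by rewrite sumr_ge0 // => i _; rewrite sqr_ge0.
move: hq; rewrite ler_norml => /andP [hq1 hq2].
have : 0 <= s by rewrite sumr_ge0 // => x _; rewrite sumr_ge0.
nra.
Qed.


Lemma herm_opp (B : Mat) : Pilot.Defs.hermitian B -> Pilot.Defs.hermitian (- B).
Proof. by rewrite /Pilot.Defs.hermitian adjmxN => ->. Qed.

Lemma psd_shift2 (B : Mat) (c : R) : Pilot.Defs.hermitian B ->
  \sum_x \sum_y complex.Re `|B x y| <= c -> psd (c%:C%C%:M - B).
Proof.
move=> hB hc; apply: psd_shift1; first exact: herm_opp.
by under eq_bigr do under eq_bigr do rewrite mxE normrN.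
Qed.

Lemma psdZ (t : R) (B : Mat) : 0 <= t -> psd B -> psd (t%:C%C *: B).
Proof.
move=> t0 [hB hq]; split.
  by rewrite /Pilot.Defs.hermitian adjmxZ conj_realC hB.
move=> v; rewrite -scalemxAr -scalemxAl mxE mulr_ge0 //.
by rewrite ler0c.
Qed.

Lemma herm_scalar (t : R) : Pilot.Defs.hermitian (t%:C%C%:M : Mat).
Proof. by rewrite /Pilot.Defs.hermitian adjmx_scalar conj_realC. Qed.

Lemma score_realize (T : Type) (A : T -> Mat) :
  (forall r, Pilot.Defs.hermitian (A r)) ->
  exists (s : T -> nat -> R) (mu : T -> seq Mat),
    (forall r, measurement (mu r)) /\
    forall r rho, exp_score s mu r rho = inner (A r) rho.
Proof.
move=> hA.
pose c r := \sum_x \sum_y complex.Re `|A r x y| + 1.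
have c0 r : 0 < c r.
  apply: ltr_wpDl; last exact: ltr01.
  by rewrite sumr_ge0 // => x _; rewrite sumr_ge0 // => y _; rewrite -lecR -normC_Re normr_ge0.
have cle r : \sum_x \sum_y complex.Re `|A r x y| <= c r by rewrite lerDl ler01.
pose t r := (2 * c r)^-1.
have t0 r : 0 <= t r by rewrite invr_ge0 mulr_ge0 // ltW.
pose M0 r := (t r)%:C%C *: ((c r)%:C%C%:M + A r).
pose M1 r := (t r)%:C%C *: ((c r)%:C%C%:M - A r).
exists (fun r y => if y == 0%N then c r else - c r), (fun r => [:: M0 r; M1 r]).
split.
  move=> r; split.
    case=> [|[|y]] //= _.
      by apply: psdZ => //; apply: psd_shift1.
    by apply: psdZ => //; apply: psd_shift2.
  rewrite !big_cons big_nil addr0 /M0 /M1 -scalerDr addrACA subrr addr0.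
  have e : t r * (c r + c r) = 1.
    have := c0 r; rewrite /t; move=> h; field; lra.
  apply/matrixP=> i j; rewrite !mxE.
  case: (i == j); rewrite ?mulr1n ?mulr0n ?addr0 ?mulr0 //.
  by rewrite -rmorphD -rmorphM e.
move=> r rho; rewrite /exp_score /= !big_ord_recl big_ord0 /=.
rewrite /M0 /M1 !innerZl innerDl innerBl -scalemx1 !innerZl.
have := c0 r; rewrite /t; set a := inner (A r) rho; set u := inner 1%:M rho.
move=> hc; field; lra.
Qed.


Lemma herm_entry (Z : Mat) : Pilot.Defs.hermitian Z -> forall a b, Z b a = Num.conj (Z a b).
Proof. by move=> hZ a b; rewrite -{1}hZ adjmxE. Qed.

Definition Eab (a b : 'I_n) : Mat :=
  if (a < b)%N then delta_mx a b + delta_mx b a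
  else if (b < a)%N then 'i%C *: delta_mx a b - 'i%C *: delta_mx b a
  else delta_mx a a.

Lemma conj_i : Num.conj ('i%C : C) = - 'i%C.
Proof. by apply/eqP; rewrite eq_complex /= oppr0 !eqxx. Qed.

Lemma Eab_herm a b : Pilot.Defs.hermitian (Eab a b).
Proof.
rewrite /Pilot.Defs.hermitian /Eab.
case: ltnP => ab; first by rewrite adjmxD !adjmx_delta addrC.
case: ltnP => ba; last by rewrite adjmx_delta.
rewrite adjmxB !adjmxZ !adjmx_delta conj_i !scaleNr opprK addrC.
by [].
Qed.

Lemma trdelta (a b : 'I_n) (Z : Mat) : \tr (adjmx (delta_mx a b) *m Z) = Z a b.
Proof. by rewrite adjmx_delta tr_delta_mul. Qed.

Lemma inner_Eab (Z : Mat) a b : Pilot.Defs.hermitian Z ->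
  inner (Eab a b) Z =
  if (a < b)%N then 2 * complex.Re (Z a b)
  else if (b < a)%N then 2 * complex.Im (Z a b)
  else complex.Re (Z a a).
Proof.
move=> hZ; rewrite /Eab; have hab := herm_entry hZ a b.
case: ltnP => ab.
  by rewrite innerDl !inner_delta hab; case: (Z a b) => x y /=; rewrite mulr2n mulrDl !mul1r.
case: ltnP => ba; last by rewrite inner_delta.
rewrite innerBl !innerZlC !trdelta hab conj_i; case: (Z a b) => x y /=.
lra.
Qed.

Lemma Eab_inj (l : 'I_n) (Z : Mat) : Pilot.Defs.hermitian Z -> \tr Z = 0 ->
  (forall a b, ~~ ((a == l) && (b == l)) -> inner (Eab a b) Z = 0) -> Z = 0.
Proof.
move=> hZ trZ hE.
have off (x y : 'I_n) : (x < y)%N -> Z x y = 0.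
  move=> xy.
  have h1 := hE x y; rewrite inner_Eab // xy in h1.
  have h2 := hE y x; rewrite inner_Eab // ltnNge (ltnW xy) /= xy in h2.
  have hyx := herm_entry hZ x y.
  have ne : forall u v : 'I_n, (u < v)%N -> ~~ ((u == l) && (v == l)).
    move=> u v uv; apply/negP => /andP [/eqP ul /eqP vl].
    by move: uv; rewrite ul vl ltnn.
  have h2b := h2; rewrite andbC in h2b.
  move: (h1 (ne _ _ xy)) (h2b (ne _ _ xy)); rewrite hyx.
  case: (Z x y) => p q /= e1 e2; apply/eqP; rewrite eq_complex /=.
  apply/andP; split; apply/eqP; lra.
have diag (x : 'I_n) : x != l -> Z x x = 0.
  move=> xl; have := hE x x; rewrite inner_Eab // ltnn.
  rewrite (negbTE xl) /= => /(_ isT) e.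
  have hxx := herm_entry hZ x x; move: hxx e.
  case: (Z x x) => p q [] e2 e1; apply/eqP; rewrite eq_complex /=.
  by move: e1 => /= e1; apply/andP; split; apply/eqP; lra.
have diagl : Z l l = 0.
  by move: trZ; rewrite /mxtrace (bigD1 l) //= big1 ?addr0 //.
apply/matrixP => x y; rewrite mxE.
case: (ltngtP x y) => xy; first exact: off.
  by rewrite herm_entry // off // rmorph0.
have -> : y = x by apply: val_inj.
case: (eqVneq x l) => [->|xl]; [exact: diagl | exact: diag].
Qed.


Lemma herm_expr (H : Mat) k : Pilot.Defs.hermitian H -> Pilot.Defs.hermitian (H ^+ k).
Proof.
rewrite /Pilot.Defs.hermitian => hH; elim: k => [|k IH].
  by rewrite expr0 adjmx_scalar rmorph1.
have -> : H ^+ k.+1 = H *m H ^+ k by rewrite exprS mulmxE.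
by rewrite adjmx_mul IH hH mulmxE -exprSr -exprS.
Qed.

Lemma herm_sq0 (H : Mat) : Pilot.Defs.hermitian H -> H ^+ 2 = 0 -> H = 0.
Proof.
move=> hH H2.
have : \tr (adjmx H *m H) = 0 by rewrite hH mulmxE -expr2 H2 mxtrace0.
move=> e; rewrite /mxtrace in e.
have e' : \sum_i \sum_j `|H j i| ^+ 2 = 0.
  rewrite -[X in _ = X]e; apply: eq_bigr => i _; rewrite mxE; apply: eq_bigr => j _.
  by rewrite adjmxE normCKC.
apply/matrixP => j i; rewrite mxE.
have := psumr_eq0P _ e' (i := i) isT.
move=> /(_ _) h.
have {}h : \sum_j `|H j i| ^+ 2 = 0.
  apply: h => k _; apply: sumr_ge0 => l _; apply: exprn_ge0; exact: normr_ge0.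
have := psumr_eq0P _ h (i := j) isT.
move=> /(_ (fun l _ => exprn_ge0 _ (normr_ge0 _))) /eqP.
by rewrite sqrf_eq0 normr_eq0 => /eqP.
Qed.

Lemma herm_nil (H : Mat) m : Pilot.Defs.hermitian H -> H ^+ m = 0 -> H = 0.
Proof.
move=> hH; elim: m {-2}m (leqnn m) => [|N IH] m le.
  rewrite leqn0 in le; rewrite (eqP le) expr0 => e.
  by rewrite -[H]mulr1 e mulr0.
move=> Hm; case: (leqP m 1) => m1.
  move: Hm; case: m {le} m1 => [|[|//]] _; last by rewrite expr1.
  by rewrite expr0 => e; rewrite -[H]mulr1 e mulr0.
have hu : (uphalf m <= N)%N.
  have : (uphalf m < m)%N by rewrite ltn_uphalf_double -addnn; lia.
  by move=> h; rewrite -ltnS; apply: leq_trans h le.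
apply: (IH (uphalf m)) => //.
apply: herm_sq0; first exact: herm_expr.
rewrite -exprM.
have hm : (m <= uphalf m * 2)%N by rewrite muln2 -leq_uphalf_double.
by rewrite -(subnK hm) exprD Hm mulr0.
Qed.


Lemma char_poly_scalar (c : C) : char_poly (c%:M : Mat) = ('X - c%:P) ^+ n.
Proof.
rewrite /char_poly /char_poly_mx map_scalar_mx /=.
have -> : ('X%:M - (c%:P)%:M : 'M[{poly C}]_n) = ('X - c%:P)%:M.
  by apply/matrixP => i j; rewrite !mxE; case: (i == j); rewrite ?mulr1n ?mulr0n ?subr0.
by rewrite det_scalar.
Qed.

Lemma prod_const_eig (c : R) :
  \prod_(i < n) ('X - (((const_mx c : 'rV[R]_n) 0 i)%:C%C)%:P) = ('X - ((c%:C%C)%:P)) ^+ n.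
Proof. by under eq_bigr do rewrite mxE; rewrite prodr_const card_ord. Qed.

Lemma eig_const (c : R) : eigvals_decr ((c%:C%C)%:M : Mat) = const_mx c.
Proof.
apply: xget_unique.
  split; first by move=> i j _; rewrite !mxE.
  by rewrite char_poly_scalar prod_const_eig.
move=> y [_ hy]; rewrite char_poly_scalar in hy.
apply/matrixP => i j; rewrite (ord1 i) mxE.
have : (('X - (c%:C%C)%:P) ^+ n).[(y 0 j)%:C%C] = 0.
  rewrite hy horner_prod (bigD1 j) //= hornerXsubC subrr mul0r //.
rewrite horner_exp hornerXsubC => /eqP; rewrite expf_eq0 => /andP [_].
by rewrite subr_eq0 => /eqP /complexI.
Qed.

Lemma eig_char (A : Mat) (c : R) : (0 < n)%N -> c != 0 ->
  eigvals_decr A = const_mx c -> char_poly A = ('X - (c%:C%C)%:P) ^+ n.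
Proof.
move=> n0 c0; rewrite /eigvals_decr.
set P := (X in xget _ X).
case: (pselect (exists v, P v)) => [ex|nex] e.
  have := xgetPex 0 ex; rewrite e => -[_ ->]; exact: prod_const_eig.
move: e; rewrite xgetPN; last by move=> v Pv; apply: nex; exists v.
move/matrixP => /(_ 0 (Ordinal n0)); rewrite !mxE => e.
by move: c0; rewrite -e eqxx.
Qed.


Lemma tr_adj (M : Mat) : \tr (adjmx M) = Num.conj (\tr M).
Proof. by rewrite /mxtrace rmorph_sum; apply: eq_bigr => i _; rewrite adjmxE. Qed.

Lemma herm_add (X Y : Mat) : Pilot.Defs.hermitian X -> Pilot.Defs.hermitian Y ->
  Pilot.Defs.hermitian (X + Y).
Proof. by rewrite /Pilot.Defs.hermitian adjmxD => -> ->. Qed.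
Lemma herm_sub (X Y : Mat) : Pilot.Defs.hermitian X -> Pilot.Defs.hermitian Y ->
  Pilot.Defs.hermitian (X - Y).
Proof. by rewrite /Pilot.Defs.hermitian adjmxB => -> ->. Qed.
Lemma herm_Z (t : R) (X : Mat) : Pilot.Defs.hermitian X ->
  Pilot.Defs.hermitian (t%:C%C *: X).
Proof. by rewrite /Pilot.Defs.hermitian adjmxZ conj_realC => ->. Qed.
Lemma herm_sum I (r : seq I) (P : pred I) (F : I -> Mat) :
  (forall i, Pilot.Defs.hermitian (F i)) -> Pilot.Defs.hermitian (\sum_(i <- r | P i) F i).
Proof.
move=> hF; elim/big_rec: _ => [|i x _ hx]; last exact: herm_add.
by rewrite /Pilot.Defs.hermitian adjmx0.
Qed.
Lemma herm1 : Pilot.Defs.hermitian (1%:M : Mat).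
Proof. by rewrite /Pilot.Defs.hermitian adjmx_scalar rmorph1. Qed.

Lemma exists_H k (V : 'I_k -> Mat) : (forall i, Pilot.Defs.hermitian (V i)) ->
  (k.+1 < n * n)%N ->
  exists H : Mat, [/\ Pilot.Defs.hermitian H, H != 0, \tr H = 0 &
     forall i, \tr (adjmx (V i) *m H) = 0].
Proof.
move=> hV hk.
pose W (i : 'I_k.+1) : Mat := if unlift ord_max i is Some j then V j else 1%:M.
have hW i : Pilot.Defs.hermitian (W i).
  by rewrite /W; case: unlift => [j|]; [exact: hV | exact: herm1].
pose Am : 'M[C]_(n * n, k.+1) := \matrix_(p, i) \tr (W i *m vec_mx (delta_mx 0 p)).
have Au (u : 'rV[C]_(n * n)) i : (u *m Am) 0 i = \tr (W i *m vec_mx u).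
  rewrite mxE {2}(row_sum_delta u) raddf_sum mulmx_sumr raddf_sum.
  apply: eq_bigr => p _; rewrite mxE /= linearZ /= -scalemxAr mxtraceZ. by [].
have rk : (0 < \rank (kermx Am))%N.
  by rewrite mxrank_ker subn_gt0; apply: leq_ltn_trans (rank_leq_col _) hk.
have [q hp] : exists q, row q (kermx Am) != 0.
  apply/existsP; apply: contraTT rk; rewrite negb_exists => /forallP h.
  suff -> : kermx Am = 0 by rewrite mxrank0.
  by apply/row_matrixP => q; rewrite row0; apply/eqP; move: (h q); rewrite negbK.
set u := row q (kermx Am) in hp.
have uA : u *m Am = 0 by rewrite /u -row_mul mulmx_ker row0.
set D := vec_mx u.
have D0 : D != 0 by rewrite /D vec_mx_eq0.
have trWD i : \tr (W i *m D) = 0 by rewrite -Au uA mxE.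
have trWDa i : \tr (W i *m adjmx D) = 0.
  have : \tr (adjmx (W i *m adjmx D)) = 0.
    by rewrite adjmx_mul adjmxK (hW i) mxtrace_mulC trWD.
  by rewrite tr_adj => /eqP; rewrite conjC_eq0 => /eqP.
have good (H : Mat) : Pilot.Defs.hermitian H ->
    (forall i, \tr (W i *m H) = 0) -> H != 0 -> exists H : Mat,
    [/\ Pilot.Defs.hermitian H, H != 0, \tr H = 0 &
     forall i, \tr (adjmx (V i) *m H) = 0].
  move=> hH trH nH; exists H; split => //.
    by have := trH ord_max; rewrite /W unlift_none mul1mx.
  by move=> i; rewrite hV; have := trH (lift ord_max i); rewrite /W liftK.
case: (eqVneq (D + adjmx D) 0) => h1.
  case: (eqVneq ('i%C *: (D - adjmx D)) 0) => h2.
    exfalso; move/eqP: h2; rewrite scaler_eq0 => /orP [|] h2.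
      by move: h2; rewrite eq_complex /= oner_eq0 andbF.
    have : (D + adjmx D) + (D - adjmx D) == 0 by rewrite h1 (eqP h2) addr0.
    rewrite addrACA subrr addr0 -mulr2n -scaler_nat scaler_eq0 pnatr_eq0 /=.
    by rewrite (negbTE D0).
  apply: (good _ _ _ h2).
    rewrite /Pilot.Defs.hermitian adjmxZ adjmxB adjmxK conj_i scaleNr -scalerN.
    by rewrite opprB.
  by move=> i; rewrite -scalemxAr mxtraceZ mulmxBr mxtraceD raddfN /= trWD trWDa subrr mulr0.
apply: (good _ _ _ h1).
  by rewrite /Pilot.Defs.hermitian adjmxD adjmxK addrC.
by move=> i; rewrite mulmxDr mxtraceD trWD trWDa addr0.
Qed.

End Basic.

Section Lower.
Local Open Scope ring_scope.
Variables (R : realType) (n' : nat).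
Local Notation n := n'.+1.
Local Notation C := (R[i]).
Local Notation Mat := ('M[C]_n).

Lemma lower_bound k : k_elicitable (@eigvals_decr R n) k -> (n ^ 2 - 1 <= k)%N.
Proof.
case=> Gh [psi [_ [hid hpsi]]].
rewrite leqNgt; apply/negP => hk.
have hk' : (k.+1 < n * n)%N by move: hk; rewrite -mulnn; lia.
pose c : R := (n%:R)^-1.
have c0 : 0 < c by rewrite invr_gt0 ltr0n.
pose rho0 : Mat := (c%:C%C)%:M.
have trc : \tr rho0 = 1.
  by rewrite mxtrace_scalar -rmorphMn /= -mulr_natr mulVf ?pnatr_eq0.
have dens0 : density rho0.
  split=> //; rewrite /rho0 -[X in psd X]addr0; apply: psd_shift1.
    by rewrite /Pilot.Defs.hermitian adjmx0.
  rewrite big1 ?ltW // => x _; rewrite big1 // => y _.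
  by rewrite mxE normr0.
have [V [hV hlev]] := hid (Gh rho0) (ex_intro _ rho0 (conj dens0 erefl)).
have [H [hH nH trH orth]] := exists_H hV hk'.
pose s := \sum_x \sum_y complex.Re `|H x y|.
have s0 : 0 <= s.
  by rewrite sumr_ge0 // => x _; rewrite sumr_ge0 // => y _; rewrite -lecR -normC_Re normr_ge0.
pose t := c / (s + 1).
have t0 : 0 < t by rewrite divr_gt0 // ltr_wpDl.
pose rt : Mat := rho0 + t%:C%C *: H.
have denst : density rt.
  split; last by rewrite mxtraceD mxtraceZ trH mulr0 addr0.
  apply: psd_shift1; first exact: herm_Z.
  have -> : \sum_x \sum_y complex.Re `|(t%:C%C *: H) x y| = t * s.
    rewrite /s mulr_sumr; apply: eq_bigr => x _; rewrite mulr_sumr.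
    apply: eq_bigr => y _; rewrite mxE normrM norm_realC (gtr0_norm t0).
    by rewrite Re_realM.
  rewrite /t mulrAC ler_pdivrMr ?ltr_wpDl // ler_pM2l //; lra.
have lev0 i : inner (V i) rho0 = 0 by exact: (proj1 (hlev rho0 dens0) erefl i).
have levt : Gh rt = Gh rho0.
  apply: (proj2 (hlev rt denst)) => i.
  by rewrite innerDr innerZr lev0 /inner orth add0r mulr0.
have eigt : eigvals_decr rt = const_mx c.
  by rewrite hpsi // levt -hpsi // eig_const.
have chit := eig_char (lt0n n) (lt0r_neq0 c0) eigt.
have := Cayley_Hamilton rt; rewrite chit rmorphXn /= rmorphB /= horner_mx_X horner_mx_C.
rewrite /rt addrAC subrr add0r exprZn => /eqP; rewrite scaler_eq0 expf_eq0 /=.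
case/orP => [h|/eqP h].
  by move/eqP: h; rewrite -[0]/((0:R)%:C%C) => /complexI tz; move: t0; rewrite tz ltxx.
by move: nH; rewrite (herm_nil hH h) eqxx.
Qed.

End Lower.

Section Upper.
Local Open Scope ring_scope.
Variables (R : realType) (n' : nat).
Local Notation n := n'.+1.
Local Notation C := (R[i]).
Local Notation Mat := ('M[C]_n).
Local Notation K := (n ^ 2 - 1)%N.

Definition da (i : 'I_K) : 'I_n := inord (i %/ n).
Definition db (i : 'I_K) : 'I_n := inord (i %% n).
Definition Eb (i : 'I_K) : Mat := @Eab R n (da i) (db i).
Definition Ghat (rho : Mat) : 'rV[R]_K := \row_i inner (Eb i) rho.

Lemma encode (a b : 'I_n) : ~~ ((a == ord_max) && (b == ord_max)) ->
  exists i : 'I_K, da i = a /\ db i = b.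
Proof.
move=> hab.
have ha : (a <= n')%N by rewrite -ltnS.
have hb : (b <= n')%N by rewrite -ltnS.
have hne : (a < n')%N || (b < n')%N.
  move: hab; rewrite -!val_eqE /= !ltn_neqAle ha hb !andbT.
  by rewrite negb_and.
have hlt : (a * n + b < K)%N.
  rewrite -mulnn; have h2 : (n * n = n' * n + n)%N by rewrite mulSn addnC.
  move/orP: hne => [h|h].
    have h1 : (a * n + n <= n' * n)%N by rewrite -mulSnr leq_mul2r h orbT.
    lia.
  have h1 : (a * n <= n' * n)%N by rewrite leq_mul2r ha orbT.
  lia.
exists (Ordinal hlt); split; apply: val_inj; rewrite /= inordK.
- by rewrite divnMDl // divn_small // addn0.
- by rewrite divnMDl // divn_small // addn0 ltnS.
- by rewrite modnMDl modn_small.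
- by rewrite ltn_pmod.
Qed.

Lemma Ghat_inj (rho sigma : Mat) : density rho -> density sigma ->
  Ghat rho = Ghat sigma -> rho = sigma.
Proof.
move=> [[hr _] tr] [[hs _] ts] e; apply/eqP; rewrite -subr_eq0; apply/eqP.
apply: (@Eab_inj R n ord_max).
- exact: herm_sub.
- by rewrite mxtraceD raddfN /= tr ts subrr.
move=> a b /encode [i [<- <-]].
have := congr1 (fun M : 'rV[R]_K => M 0 i) e; rewrite !mxE /Eb => ei.
by rewrite innerBr ei subrr.
Qed.

Lemma Ghat_elic : elicitable Ghat.
Proof.
pose A (r : 'rV[R]_K) : Mat :=
  \sum_i ((2 * r 0 i)%:C%C *: Eb i - (r 0 i ^+ 2)%:C%C *: 1%:M).
have hA r : Pilot.Defs.hermitian (A r).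
  apply: herm_sum => i; apply: herm_sub; apply: herm_Z; [exact: Eab_herm|exact: herm1].
have [s [mu [hm hs]]] := @score_realize R n _ A hA.
exists s, mu; split => // rho dr r ne.
have e (r' : 'rV[R]_K) : exp_score s mu r' rho
   = \sum_i (2 * r' 0 i * (Ghat rho) 0 i - r' 0 i ^+ 2).
  rewrite hs /A inner_suml; apply: eq_bigr => i _.
  by rewrite innerBl !innerZl inner_density // mxE mulr1.
rewrite (e r) (e (Ghat rho)) -subr_gt0 -sumrB.
have [i hi] : exists i, r 0 i != Ghat rho 0 i.
  case: (boolP [exists i, r 0 i != Ghat rho 0 i]) => [/existsP //|].
  rewrite negb_exists => /forallP h; exfalso; apply: ne.
  apply/matrixP => x y; rewrite (ord1 x); apply/eqP; move: (h y); by rewrite negbK.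
move: hi; set g := Ghat rho => hi.
rewrite (eq_bigr (fun j => (g 0 j - r 0 j) ^+ 2)); last first.
  by move=> j _; rewrite sqrrB; ring.
rewrite (bigD1 i) //=.
have h1 : 0 < (g 0 i - r 0 i) ^+ 2.
  by rewrite exprn_even_gt0 //= subr_eq0 eq_sym.
have h2 : 0 <= \sum_(j | j != i) (g 0 j - r 0 j) ^+ 2.
  by apply: sumr_ge0 => j _; apply: sqr_ge0.
lra.
Qed.

Lemma Ghat_ident : identifiable Ghat.
Proof.
move=> r _.
exists (fun i => Eb i - (r 0 i)%:C%C *: 1%:M); split.
  by move=> i; apply: herm_sub; [exact: Eab_herm | apply: herm_Z; exact: herm1].
move=> rho dr.
split.
  by move=> <- i; rewrite innerBl innerZl inner_density // mxE mulr1 subrr.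
move=> h; apply/matrixP => x y; rewrite (ord1 x) mxE.
by apply/eqP; rewrite -subr_eq0; apply/eqP; have := h y; rewrite innerBl innerZl inner_density // mulr1.
Qed.

Lemma upper_bound : k_elicitable (@eigvals_decr R n) K.
Proof.
exists Ghat, (fun r => eigvals_decr (xget 0 (fun rho : Mat => density rho /\ Ghat rho = r))).
split; first exact: Ghat_elic.
split; first exact: Ghat_ident.
move=> rho dr; congr eigvals_decr.
have [d e] := xgetPex (0 : Mat) (ex_intro (fun x : Mat => density x /\ Ghat x = Ghat rho) rho (conj dr erefl)).
by apply: Ghat_inj.
Qed.

End Upper.

Theorem corollary6p6 (R : realType) (n : nat) (hn : (0 < n)%N) :
  elicQ_eq (@eigvals_decr R n) (n ^ 2 - 1).
Proof.
case: n hn => [//|n'] _; split; first exact: upper_bound.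
exact: lower_bound.
Qed.
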